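(* Let $a<b$ and let $f,g:[a,b]\to\mathbb{R}$ be continuous and differentiable (from the right) at $a$. For $a<x\le b$ write $I_f(a,x)=\frac{1}{x-a}\int_a^x f(t)\,\mathrm{d}t$ and similarly $I_g(a,x)$. If $$\bigl[f(a)\,I_g(a,b)-g(a)\,I_f(a,b)\bigr]\cdot\bigl[f'(a)\,I_g(a,b)-g'(a)\,I_f(a,b)\bigr]> 0,$$ then there exists $\xi\in(a,b)$ such that $$I_g(a,b)\bigl(f(a)-I_f(a,\xi)\bigr)=I_f(a,b)\bigl(g(a)-I_g(a,\xi)\bigr).$$ *)

(* Defs.v *)
From Stdlib Require Import Reals.
From Coquelicot Require Import Coquelicot.
Open Scope R_scope.

Definition continuous_on_closed (f : R -> R) (a b : R) : Prop :=
  forall x, a <= x <= b ->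
    filterlim f (within (fun y => a <= y <= b) (locally x)) (locally (f x)).

Definition right_derive (f : R -> R) (a l : R) : Prop :=
  filterlim (fun x => (f x - f a) / (x - a)) (at_right a) (locally l).

Definition Imean (f : R -> R) (a x : R) : R := RInt f a x / (x - a).

(* Main.v *)
Require Import Defs.
From Stdlib Require Import Reals Lra.
From Coquelicot Require Import Coquelicot.
Open Scope R_scope.

Definition clamp (a b y : R) := Rmax a (Rmin b y).

Lemma clamp_lip a b x y : a <= b -> Rabs (clamp a b y - clamp a b x) <= Rabs (y - x).
Proof.
  intros. unfold clamp, Rmax, Rmin; repeat destruct Rle_dec; unfold Rabs;
  repeat destruct Rcase_abs; lra.
Qed.

Lemma clamp_in a b x : a <= b -> a <= clamp a b x <= b.
Proof. intros. unfold clamp, Rmax, Rmin; repeat destruct Rle_dec; lra. Qed.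

Lemma clamp_id a b x : a <= x <= b -> clamp a b x = x.
Proof. intros. unfold clamp, Rmax, Rmin; repeat destruct Rle_dec; lra. Qed.

Lemma ext_cont f a b : a <= b -> continuous_on_closed f a b ->
  forall x, continuous (fun y => f (clamp a b y)) x.
Proof.
  intros Hab Hf x P HP.
  destruct (Hf (clamp a b x) (clamp_in a b x Hab) P HP) as [e He].
  exists e. intros y Hy. apply He.
  - change (Rabs (clamp a b y - clamp a b x) < e).
    change (Rabs (y - x) < e) in Hy.
    pose proof (clamp_lip a b x y Hab). lra.
  - apply clamp_in; lra.
Qed.

Lemma ex_RInt_all (F : R -> R) : (forall x, continuous F x) -> forall u v, ex_RInt F u v.
Proof. intros H u v. apply (@ex_RInt_continuous R_CompleteNormedModule). intros; apply H. Qed.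

Lemma RInt_lin (F G : R -> R) p q u v : (forall x, continuous F x) -> (forall x, continuous G x) ->
  RInt (fun t => p * F t + q * G t) u v = p * RInt F u v + q * RInt G u v.
Proof.
  intros HF HG.
  assert (H := RInt_plus (fun t => scal p (F t)) (fun t => scal q (G t)) u v
    (ex_RInt_scal _ _ _ _ (ex_RInt_all F HF u v))
    (ex_RInt_scal _ _ _ _ (ex_RInt_all G HG u v))).
  etransitivity. exact H. apply (f_equal2 Rplus); apply (@RInt_scal R_CompleteNormedModule); apply ex_RInt_all; auto.
Qed.

Lemma RInt_clamp (f : R -> R) a x b : a <= x <= b -> RInt f a x = RInt (fun y => f (clamp a b y)) a x.
Proof.
  intros H. apply RInt_ext. intros t Ht. rewrite Rmin_left in Ht by lra.
  rewrite Rmax_right in Ht by lra. rewrite clamp_id; auto; lra.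
Qed.

Lemma RInt_sub_const (K : R -> R) k u v : (forall x, continuous K x) ->
  RInt (fun t => K t - k) u v = RInt K u v - k * (v - u).
Proof.
  intros HK. etransitivity.
  - apply (@RInt_minus R_CompleteNormedModule K (fun _ => k)).
    + apply ex_RInt_all; auto.
    + apply ex_RInt_all. intros; apply continuous_const.
  - rewrite (@RInt_const R_CompleteNormedModule). unfold minus, plus, opp, scal; simpl.
    unfold mult; simpl. ring.
Qed.

Lemma phi_continuity (K : R -> R) a k : (forall x, continuous K x) ->
  continuity (fun x => RInt K a x - k * (x - a)).
Proof.
  intros HK x. apply continuity_pt_filterlim.
  apply (ex_derive_continuous (fun x => RInt K a x - k * (x - a))).
  eexists. apply (is_derive_minus (fun x => RInt K a x) (fun x => k * (x - a))).
  - apply (is_derive_RInt K (fun x => RInt K a x) a x); auto. apply filter_forall. intros y.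
    apply (@RInt_correct R_CompleteNormedModule). apply ex_RInt_all; auto.
  - auto_derive; auto.
Qed.

Lemma divmul (r d : R) : d <> 0 -> r = r / d * d.
Proof. intros; field; auto. Qed.

Theorem mainTheorem11 (a b : R) (f g : R -> R) (df dg : R) :
  a < b ->
  continuous_on_closed f a b -> continuous_on_closed g a b ->
  right_derive f a df -> right_derive g a dg ->
  (f a * Imean g a b - g a * Imean f a b) * (df * Imean g a b - dg * Imean f a b) > 0 ->
  exists xi, a < xi < b /\
    Imean g a b * (f a - Imean f a xi) = Imean f a b * (g a - Imean g a xi).
Proof.
  intros Hab Hf Hg Hdf Hdg Hpos.
  set (A := Imean f a b). set (B := Imean g a b). fold A B in Hpos.
  set (c := f a * B - g a * A) in Hpos.
  set (F := fun y => f (clamp a b y)). set (G := fun y => g (clamp a b y)).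
  assert (HF : forall x, continuous F x) by (apply ext_cont; auto; lra).
  assert (HG : forall x, continuous G x) by (apply ext_cont; auto; lra).
  set (p := c * B). set (q := - (c * A)).
  set (K := fun t => p * F t + q * G t).
  assert (HK : forall x, continuous K x).
  { intros x. unfold K.
    apply (continuous_plus (fun t => p * F t) (fun t => q * G t)).
    - apply (continuous_scal_r p F); auto.
    - apply (continuous_scal_r q G); auto. }
  assert (Fa : F a = f a) by (unfold F; rewrite clamp_id; auto; lra).
  assert (Ga : G a = g a) by (unfold G; rewrite clamp_id; auto; lra).
  assert (Ka : K a = c * c) by (unfold K, p, q, c; rewrite Fa, Ga; ring).
  assert (Hc : c <> 0) by (intro E; rewrite E in Hpos; lra).
  assert (Hcc : 0 < c * c) by (apply Rsqr_pos_lt in Hc; unfold Rsqr in Hc; lra).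
  assert (Hev : at_right a (fun t => clamp a b t = t)).
  { assert (Hba : 0 < b - a) by lra. exists (mkposreal (b - a) Hba). intros t Ht Hat.
    change (Rabs (t - a) < b - a) in Ht. apply clamp_id.
    unfold Rabs in Ht; destruct Rcase_abs; lra. }
  assert (HdF : filterlim (fun t => (F t - F a) / (t - a)) (at_right a) (locally df)).
  { eapply filterlim_ext_loc; [|exact Hdf]. eapply filter_imp; [|exact Hev].
    intros t Ht; simpl. rewrite Fa; unfold F; rewrite Ht; reflexivity. }
  assert (HdG : filterlim (fun t => (G t - G a) / (t - a)) (at_right a) (locally dg)).
  { eapply filterlim_ext_loc; [|exact Hdg]. eapply filter_imp; [|exact Hev].
    intros t Ht; simpl. rewrite Ga; unfold G; rewrite Ht; reflexivity. }
  assert (HdK : filterlim (fun t => (K t - K a) / (t - a)) (at_right a) (locally (p * df + q * dg))).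
  { apply filterlim_ext with (f := fun t => plus (scal p ((F t - F a) / (t - a))) (scal q ((G t - G a) / (t - a)))).
    - intros t. change (p * ((F t - F a) / (t - a)) + q * ((G t - G a) / (t - a)) = (K t - K a) / (t - a)).
      unfold K, Rdiv; ring.
    - eapply filterlim_comp_2.
      + eapply filterlim_comp; [exact HdF| apply (@filterlim_scal_r R_AbsRing R_NormedModule p df)].
      + eapply filterlim_comp; [exact HdG| apply (@filterlim_scal_r R_AbsRing R_NormedModule q dg)].
      + apply (@filterlim_plus R_AbsRing R_NormedModule). }
  assert (L0 : 0 < p * df + q * dg).
  { assert (E : p * df + q * dg = c * (df * B - dg * A)) by (unfold p, q; ring). lra. }
  assert (Hloc : locally (p * df + q * dg) (fun y => 0 < y)).
  { exists (mkposreal _ L0). intros y Hy. change (Rabs (y - (p * df + q * dg)) < p * df + q * dg) in Hy.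
    unfold Rabs in Hy; destruct Rcase_abs; lra. }
  destruct (HdK _ Hloc) as [d Hd].
  set (x0 := Rmin (a + d / 2) ((a + b) / 2)).
  assert (Hx0 : a < x0 < b /\ x0 < a + d).
  { unfold x0, Rmin; destruct Rle_dec; destruct d; simpl in *; lra. }
  set (phi := fun x => RInt K a x - c * c * (x - a)).
  assert (P0 : phi x0 > 0).
  { unfold phi. rewrite <- RInt_sub_const by auto.
    apply Rlt_gt. apply RInt_gt_0; [lra| |].
    - intros t Ht. assert (Hb : ball a d t).
      { change (Rabs (t - a) < d). unfold Rabs; destruct Rcase_abs; lra. }
      specialize (Hd t Hb ltac:(lra)). simpl in Hd.
      assert (E : K t - K a = (K t - K a) / (t - a) * (t - a)) by (field; lra).
      rewrite Ka in E, Hd. cbv beta. rewrite E. apply Rmult_lt_0_compat; lra.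
    - intros t _. apply (continuous_minus K (fun _ => c * c)); auto. apply continuous_const. }
  assert (Pb : phi b < 0).
  { unfold phi. unfold K. rewrite RInt_lin by auto.
    unfold F, G. rewrite <- (RInt_clamp f a b b), <- (RInt_clamp g a b b) by lra.
    assert (EA : RInt f a b = A * (b - a)) by (unfold A, Imean; apply divmul; lra).
    assert (EB : RInt g a b = B * (b - a)) by (unfold B, Imean; apply divmul; lra).
    rewrite EA, EB. unfold p, q. nra. }
  destruct (IVT_gen phi x0 b 0 (phi_continuity K a (c * c) HK)) as [xi [Hxi Hphi]].
  { unfold Rmin, Rmax; destruct Rle_dec; lra. }
  rewrite Rmin_left, Rmax_right in Hxi by lra.
  assert (Hxi2 : x0 < xi < b).
  { assert (xi <> x0) by (intro E; rewrite E in Hphi; lra).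
    assert (xi <> b) by (intro E; rewrite E in Hphi; lra).
    destruct Hxi; split; [destruct H1|destruct H2]; auto; congruence. }
  exists xi. split; [lra|].
  unfold phi, K in Hphi. rewrite RInt_lin in Hphi by auto.
  unfold F, G in Hphi. rewrite <- (RInt_clamp f a xi b), <- (RInt_clamp g a xi b) in Hphi by lra.
  fold A B. unfold Imean.
  set (Rf := RInt f a xi) in *. set (Rg := RInt g a xi) in *.
  assert (E : B * Rf - A * Rg = c * (xi - a)).
  { apply (Rmult_eq_reg_l c); auto. unfold p, q in Hphi. nra. }
  apply (Rmult_eq_reg_r (xi - a)); [|lra].
  replace (B * (f a - Rf / (xi - a)) * (xi - a)) with (B * f a * (xi - a) - B * Rf) by (field; lra).
  replace (A * (g a - Rg / (xi - a)) * (xi - a)) with (A * g a * (xi - a) - A * Rg) by (field; lra).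
  unfold c in E. nra.
Qed.
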